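(* Let $H\in(0,1)$ with $H\neq1/2$, $T>0$, and let $X=S^H$ be a sub-fractional Brownian motion with index $H$. Then (a) $\displaystyle\lim_{h\to0+}\sup_{h\le t\le T-h}\Big|\frac{\mathbb{E}(X_{t+h}-2X_t+X_{t-h})^2}{h^{2H}}-(4-2^{2H})\Big|>0$; (b) for every $\varphi\in\Psi$, $\displaystyle\lim_{h\to0+}\sup_{\varphi(h)\le t\le T-h}\Big|\frac{\mathbb{E}(X_{t+h}-2X_t+X_{t-h})^2}{h^{2H}}-(4-2^{2H})\Big|=0$.
   Context: A sub-fractional Brownian motion with index $H\in(0,1)$ is a mean zero Gaussian process $(S^H_t)_{t\ge0}$ with covariance $G_H(s,t)=s^{2H}+t^{2H}-\tfrac12[(s+t)^{2H}+|s-t|^{2H}]$. $\Psi$ is the class of continuous $\varphi\colon(0,T]\to[0,\infty)$ with $\varphi(h)\to0$, $L(h):=\varphi(h)/h\to\infty$, $hL(h)^3\to0$ as $h\downarrow0$. *)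

(* Defs.v *)
From Stdlib Require Import Reals Lra.
Open Scope R_scope.

(* x^a for x >= 0, with the convention 0^a = 0 (a > 0); Rpower 0 a = 1 in Stdlib. *)
Definition pw (x a : R) : R := if Rle_dec x 0 then 0 else Rpower x a.

Definition G_H (H s t : R) : R :=
  pw s (2*H) + pw t (2*H) - / 2 * (pw (s + t) (2*H) + pw (Rabs (s - t)) (2*H)).

(* E (X_{t+h} - 2 X_t + X_{t-h})^2 for the centred Gaussian process X = S^H,
   expanded through the covariance G_H (bilinearity of expectation). *)
Definition second_moment (H t h : R) : R :=
  G_H H (t+h) (t+h) + 4 * G_H H t t + G_H H (t-h) (t-h)
  - 4 * G_H H (t+h) t - 4 * G_H H t (t-h) + 2 * G_H H (t+h) (t-h).

Definition dev (H t h : R) : R :=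
  Rabs (second_moment H t h / pw h (2*H) - (4 - pw 2 (2*H))).

Definition dev_set (H T : R) (a : R -> R) (h : R) : R -> Prop :=
  fun y => exists t, a h <= t /\ t <= T - h /\ y = dev H t h.

(* lim_{h -> 0+} sup (dev_set h) = L : for h small the supremum exists
   (least upper bound) and is within eps of L. *)
Definition sup_lim_right (E : R -> R -> Prop) (L : R) : Prop :=
  forall eps, eps > 0 -> exists delta, delta > 0 /\
    forall h, 0 < h < delta -> exists S, is_lub (E h) S /\ Rabs (S - L) < eps.

Definition in_Psi (T : R) (phi : R -> R) : Prop :=
  let D := fun h => 0 < h <= T in
  (forall x, D x -> limit1_in phi D (phi x) x) /\
  (forall h, D h -> 0 <= phi h) /\
  limit1_in phi D 0 0 /\
  (forall M, exists d, d > 0 /\ forall h, D h -> h < d -> phi h / h > M) /\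
  limit1_in (fun h => h * (phi h / h) ^ 3) D 0 0.

(* Main.v *)
Require Import Defs.
From Stdlib Require Import Reals Lra Classical.
Open Scope R_scope.
Fixpoint Dk (k : nat) (b y : R) : R :=
  match k with
  | O => Rpower y b
  | S k => Dk k b (y+1) - Dk k b y
  end.

Fixpoint ff (b : R) (k : nat) : R :=
  match k with
  | O => 1
  | S k => b * ff (b-1) k
  end.

Lemma Dk_deriv k : forall b y, 0 < y ->
  derivable_pt_lim (Dk k b) y (b * Dk k (b-1) y).
Proof.
  induction k as [|k IH]; intros b y Hy.
  - simpl. apply derivable_pt_lim_power; exact Hy.
  - change (derivable_pt_lim (fun y => Dk k b (y+1) - Dk k b y) y
      (b * (Dk k (b-1) (y+1) - Dk k (b-1) y))).
    replace (b * (Dk k (b-1) (y+1) - Dk k (b-1) y)) with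
      (b * Dk k (b-1) (y+1) * 1 - b * Dk k (b-1) y) by ring.
    apply (derivable_pt_lim_minus (fun y => Dk k b (y+1)) (Dk k b)).
    + apply (derivable_pt_lim_comp (fun y => y + 1) (Dk k b)).
      * pose proof (derivable_pt_lim_plus id (fct_cte 1) y 1 0
          (derivable_pt_lim_id y) (derivable_pt_lim_const 1 y)) as Hd.
        rewrite Rplus_0_r in Hd. exact Hd.
      * apply IH; lra.
    + apply IH; exact Hy.
Qed.

Lemma Dk_mvt k : forall b y, 0 < y ->
  exists xi, y <= xi /\ Dk k b y = ff b k * Rpower xi (b - INR k).
Proof.
  induction k as [|k IH]; intros b y Hy.
  - exists y. split; [lra|]. simpl. replace (b - 0) with b by ring. ring.
  - destruct (MVT_cor2 (Dk k b) (fun c => b * Dk k (b-1) c) y (y+1))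
      as [c [Hc1 Hc2]]; [lra| |].
    { intros c Hc. apply Dk_deriv. lra. }
    destruct (IH (b-1) c) as [xi [Hxi1 Hxi2]]; [lra|].
    exists xi. split; [lra|].
    change (Dk k b (y+1) - Dk k b y = b * ff (b-1) k * Rpower xi (b - INR (S k))).
    rewrite Hc1, Hxi2, S_INR.
    replace (b - (INR k + 1)) with (b - 1 - INR k) by ring. ring.
Qed.
Lemma pw_pos x a : 0 < x -> pw x a = Rpower x a.
Proof. intros; unfold pw; destruct (Rle_dec x 0); [lra|auto]. Qed.
Lemma pw_0 a : pw 0 a = 0.
Proof. unfold pw; destruct (Rle_dec 0 0); [auto|lra]. Qed.
Lemma pw_1 a : pw 1 a = 1.
Proof. rewrite pw_pos by lra. unfold Rpower. rewrite ln_1, Rmult_0_r. apply exp_0. Qed.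
Lemma pw_ge0 x a : 0 <= pw x a.
Proof. unfold pw; destruct (Rle_dec x 0); [lra|]. unfold Rpower. left; apply exp_pos. Qed.

Lemma pw_hom h x a : 0 < h -> 0 <= x -> pw (h*x) a = pw h a * pw x a.
Proof.
  intros Hh Hx. destruct Hx as [Hx|Hx].
  - rewrite !pw_pos; try nra. symmetry; apply Rpower_mult_distr; auto.
  - subst. rewrite Rmult_0_r, !pw_0. ring.
Qed.

Lemma G_hom H h s t : 0 < h -> 0 <= s -> 0 <= t ->
  G_H H (h*s) (h*t) = pw h (2*H) * G_H H s t.
Proof.
  intros Hh Hs Ht. unfold G_H.
  replace (h*s + h*t) with (h*(s+t)) by ring.
  replace (Rabs (h*s - h*t)) with (h * Rabs (s-t)).
  2:{ replace (h*s-h*t) with (h*(s-t)) by ring. rewrite Rabs_mult, (Rabs_pos_eq h); lra. }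
  assert (0 <= Rabs (s-t)) by apply Rabs_pos.
  rewrite !(pw_hom h); try lra.
Qed.

Definition D0 (a y : R) : R :=
  pw (y+4) a - 4 * pw (y+3) a + 6 * pw (y+2) a - 4 * pw (y+1) a + pw y a.

Lemma sm_formula H v : 1 <= v ->
  second_moment H v 1 = (4 - pw 2 (2*H)) - / 2 * D0 (2*H) (2*v-2).
Proof.
  intros Hv. unfold second_moment, G_H, D0.
  replace (Rabs (v+1 - (v+1))) with 0 by (rewrite Rminus_diag, Rabs_R0; auto).
  replace (Rabs (v - v)) with 0 by (rewrite Rminus_diag, Rabs_R0; auto).
  replace (Rabs (v-1 - (v-1))) with 0 by (rewrite Rminus_diag, Rabs_R0; auto).
  replace (Rabs (v+1 - v)) with 1 by (rewrite Rabs_pos_eq; lra).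
  replace (Rabs (v - (v-1))) with 1 by (rewrite Rabs_pos_eq; lra).
  replace (Rabs (v+1 - (v-1))) with 2 by (rewrite Rabs_pos_eq; lra).
  replace (v+1+(v+1)) with (2*v-2+4) by ring.
  replace (v+1+v) with (2*v-2+3) by ring.
  replace (v+v) with (2*v-2+2) by ring.
  replace (v+(v-1)) with (2*v-2+1) by ring.
  replace (v-1+(v-1)) with (2*v-2) by ring.
  replace (v+1+(v-1)) with (2*v-2+2) by ring.
  rewrite pw_0, pw_1.
  lra.
Qed.

Lemma dev_formula H t h : 0 < h -> h <= t ->
  dev H t h = / 2 * Rabs (D0 (2*H) (2*(t/h) - 2)).
Proof.
  intros Hh Ht.
  assert (Hv : 1 <= t/h).
  { apply (Rmult_le_reg_r h); auto. unfold Rdiv. rewrite Rmult_assoc, Rinv_l; lra. }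
  assert (Et : t = h * (t/h)) by (field; lra).
  assert (Hp : 0 < pw h (2*H)).
  { rewrite pw_pos by auto. unfold Rpower; apply exp_pos. }
  unfold dev.
  assert (E : second_moment H t h = pw h (2*H) * second_moment H (t/h) 1).
  { unfold second_moment. set (v := t/h) in *.
    rewrite Et.
    replace (h*v+h) with (h*(v+1)) by ring.
    replace (h*v-h) with (h*(v-1)) by ring.
    rewrite !G_hom; try lra. }
  rewrite E, sm_formula by auto.
  replace (pw h (2 * H) * (4 - pw 2 (2 * H) - / 2 * D0 (2 * H) (2 * (t / h) - 2)) /
    pw h (2 * H) - (4 - pw 2 (2 * H))) with (- (/2 * D0 (2 * H) (2 * (t / h) - 2)))
    by (field; lra).
  rewrite Rabs_Ropp, Rabs_mult, Rabs_pos_eq; lra.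
Qed.

Lemma D0_Dk a y : 0 < y -> D0 a y = Dk 4 a y.
Proof.
  intros Hy. unfold D0. cbn [Dk].
  rewrite !pw_pos by lra.
  replace (y+1+1+1+1) with (y+4) by ring.
  replace (y+1+1+1) with (y+3) by ring.
  replace (y+1+1) with (y+2) by ring. ring.
Qed.

Lemma exp_le x y : x <= y -> exp x <= exp y.
Proof. intros [H|H]; [left; apply exp_increasing; auto| subst; lra]. Qed.

Lemma ln_ge0 x : 1 <= x -> 0 <= ln x.
Proof. intros [H|H]; [left; rewrite <- ln_1; apply ln_increasing; lra | subst; rewrite ln_1; lra]. Qed.

Lemma ff4_nz a : 0 < a < 2 -> a <> 1 -> ff a 4 <> 0.
Proof.
  intros Ha Ha1. simpl.
  repeat apply Rmult_integral_contrapositive_currified; lra.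
Qed.

Lemma D0_1_nz a : 0 < a < 2 -> a <> 1 -> D0 a 1 <> 0.
Proof.
  intros Ha Ha1. rewrite D0_Dk by lra.
  destruct (Dk_mvt 4 a 1) as [xi [Hx E]]; [lra|]. rewrite E.
  apply Rmult_integral_contrapositive_currified. apply ff4_nz; auto.
  unfold Rpower. apply Rgt_not_eq, exp_pos.
Qed.

Lemma D0_decay a y : a < 3 -> 1 <= y -> Rabs (D0 a y) <= Rabs (ff a 4) / y.
Proof.
  intros Ha Hy. rewrite D0_Dk by lra.
  destruct (Dk_mvt 4 a y) as [xi [Hx E]]; [lra|]. rewrite E, Rabs_mult.
  unfold Rdiv. apply Rmult_le_compat_l; [apply Rabs_pos|].
  rewrite Rabs_pos_eq by (unfold Rpower; left; apply exp_pos).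
  unfold Rpower. replace (INR 4) with 4 by (simpl; ring).
  apply Rle_trans with (exp (- ln xi)).
  - apply exp_le. assert (0 <= ln xi) by (apply ln_ge0; lra). nra.
  - rewrite exp_Ropp, exp_ln by lra. apply Rinv_le_contravar; lra.
Qed.

Lemma pw_le5 a z : 0 <= a -> 0 <= z <= 5 -> pw z a <= Rpower 5 a.
Proof.
  intros Ha [[Hz|Hz] Hz5].
  - rewrite pw_pos by auto. apply Rle_Rpower_l; lra.
  - subst. rewrite pw_0. unfold Rpower; left; apply exp_pos.
Qed.

Lemma D0_bound a y : 0 < a < 3 -> 0 <= y ->
  Rabs (D0 a y) <= Rabs (ff a 4) + 16 * Rpower 5 a.
Proof.
  intros Ha Hy.
  assert (P : 0 < Rpower 5 a) by (unfold Rpower; apply exp_pos).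
  destruct (Rle_lt_dec 1 y) as [H1|H1].
  - apply Rle_trans with (Rabs (ff a 4) / y). apply D0_decay; lra.
    assert (Rabs (ff a 4) / y <= Rabs (ff a 4)).
    { unfold Rdiv. rewrite <- (Rmult_1_r (Rabs (ff a 4))) at 2.
      apply Rmult_le_compat_l. apply Rabs_pos.
      rewrite <- Rinv_1. apply Rinv_le_contravar; lra. }
    lra.
  - assert (A1 := pw_le5 a (y+4)). assert (A2 := pw_le5 a (y+3)).
    assert (A3 := pw_le5 a (y+2)). assert (A4 := pw_le5 a (y+1)).
    assert (A5 := pw_le5 a y).
    assert (B1 := pw_ge0 (y+4) a). assert (B2 := pw_ge0 (y+3) a).
    assert (B3 := pw_ge0 (y+2) a). assert (B4 := pw_ge0 (y+1) a).
    assert (B5 := pw_ge0 y a). assert (R0 := Rabs_pos (ff a 4)).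
    unfold D0. apply Rabs_le. split; lra.
Qed.
Theorem mainTheorem12 (H T : R) (HH : 0 < H < 1) (Hhalf : H <> / 2) (HT : 0 < T) :
  (exists L, L > 0 /\ sup_lim_right (dev_set H T (fun h => h)) L) /\
  (forall phi, in_Psi T phi -> sup_lim_right (dev_set H T phi) 0).
Proof.
  set (a := 2*H).
  assert (Ha : 0 < a < 2) by (unfold a; lra).
  assert (Ha1 : a <> 1) by (unfold a; intro; apply Hhalf; lra).
  set (F := fun y => / 2 * Rabs (D0 a y)).
  assert (Fdev : forall t h, 0 < h -> h <= t -> dev H t h = F (2*(t/h) - 2)).
  { intros t h Hh Ht. unfold F, a. apply dev_formula; auto. }
  assert (Fge : forall t h, 0 < h -> h <= t -> 0 <= 2*(t/h) - 2).
  { intros t h Hh Ht.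
    assert (1 <= t/h).
    { apply (Rmult_le_reg_r h); auto. unfold Rdiv. rewrite Rmult_assoc, Rinv_l; lra. }
    lra. }
  split.
  - set (A := fun z => exists y, 0 <= y /\ z = F y).
    destruct (completeness A) as [L HL].
    { exists (/2 * (Rabs (ff a 4) + 16 * Rpower 5 a)). intros z [y [Hy ->]].
      unfold F. apply Rmult_le_compat_l; [lra|]. apply D0_bound; auto; lra. }
    { exists (F 0). exists 0. split; auto; lra. }
    assert (HF1 : 0 < F 1).
    { unfold F. apply Rmult_lt_0_compat; [lra|]. apply Rabs_pos_lt, D0_1_nz; auto. }
    assert (HL1 : F 1 <= L) by (apply (proj1 HL); exists 1; split; auto; lra).
    exists L. split; [lra|].
    intros eps Heps.
    assert (Ex : exists y1, 0 <= y1 /\ L - eps/2 < F y1).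
    { apply NNPP; intro N.
      assert (L <= L - eps/2); [|lra].
      apply (proj2 HL). intros z [y [Hy ->]].
      apply Rnot_lt_le. intro C. apply N. exists y; auto. }
    destruct Ex as [y1 [Hy1 Hy1']].
    exists (2*T/(y1+4)). split.
    { apply Rdiv_lt_0_compat; lra. }
    intros h [Hh Hhd].
    assert (Hh4 : h*(y1+4) < 2*T).
    { apply (Rmult_lt_compat_r (y1+4)) in Hhd; [|lra].
      unfold Rdiv in Hhd. rewrite Rmult_assoc, Rinv_l in Hhd; lra. }
    set (t1 := h*(y1+2)/2).
    assert (Ht1 : dev_set H T (fun h => h) h (dev H t1 h)).
    { exists t1. unfold t1. repeat split; try nra. }
    assert (Et1 : dev H t1 h = F y1).
    { rewrite Fdev; unfold t1; try nra. f_equal. field. lra. }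
    destruct (completeness (dev_set H T (fun h => h) h)) as [S HS].
    { exists L. intros z [t [Ht1' [Ht2 ->]]]. rewrite Fdev by auto.
      apply (proj1 HL). exists (2*(t/h)-2). split; auto. }
    { eexists; exact Ht1. }
    exists S. split; auto.
    assert (S1 : dev H t1 h <= S) by (apply (proj1 HS); auto).
    assert (S2 : S <= L).
    { apply (proj2 HS). intros z [t [Ht1' [Ht2 ->]]]. rewrite Fdev by auto.
      apply (proj1 HL). exists (2*(t/h)-2). split; auto. }
    apply Rabs_def1; lra.
  - intros phi [Pc [Pnn [P0 [PL P3]]]] eps Heps.
    set (Y := Rabs (ff a 4) / eps + 1).
    assert (HY : 1 <= Y).
    { unfold Y. assert (0 <= Rabs (ff a 4) / eps).
      { unfold Rdiv. apply Rmult_le_pos. apply Rabs_pos. left; apply Rinv_0_lt_compat; auto. }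
      lra. }
    assert (Fsmall : forall y, Y <= y -> F y <= eps/2).
    { intros y Hy. unfold F.
      assert (D := D0_decay a y ltac:(lra) ltac:(lra)).
      assert (Rabs (ff a 4) / y <= eps).
      { unfold Rdiv. apply (Rmult_le_reg_r y); [lra|].
        rewrite Rmult_assoc, Rinv_l, Rmult_1_r by lra.
        assert (Rabs (ff a 4) = (Rabs (ff a 4) / eps) * eps) by (field; lra).
        unfold Y in Hy. nra. }
      lra. }
    destruct (PL (Y/2 + 1)) as [d [Hd Hd']].
    unfold limit1_in, limit_in in P0. simpl in P0.
    destruct (P0 (T/2)) as [al [Hal Hal']]; [lra|].
    exists (Rmin d (Rmin al (T/2))). split.
    { repeat apply Rmin_pos; lra. }
    intros h [Hh Hhd].
    assert (Hh1 : h < d) by (eapply Rlt_le_trans; [exact Hhd| apply Rmin_l]).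
    assert (Hh2 : h < al)
      by (eapply Rlt_le_trans; [exact Hhd| eapply Rle_trans; [apply Rmin_r|apply Rmin_l]]).
    assert (Hh3 : h < T/2)
      by (eapply Rlt_le_trans; [exact Hhd| eapply Rle_trans; [apply Rmin_r|apply Rmin_r]]).
    assert (Hdom : 0 < h <= T) by lra.
    assert (Hph : phi h / h > Y/2 + 1) by (apply Hd'; auto).
    assert (Hph2 : R_dist (phi h) 0 < T/2).
    { apply Hal'. split; auto. unfold R_dist. rewrite Rminus_0_r, Rabs_pos_eq; lra. }
    unfold R_dist in Hph2. rewrite Rminus_0_r in Hph2.
    assert (Hph3 : phi h < T/2) by (apply Rabs_def2 in Hph2; lra).
    assert (Hgt : forall t, phi h <= t -> h <= t /\ Y <= 2*(t/h) - 2).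
    { intros t Ht.
      assert (phi h / h <= t / h).
      { unfold Rdiv. apply Rmult_le_compat_r; auto. left; apply Rinv_0_lt_compat; auto. }
      assert (h < phi h).
      { apply (Rmult_lt_reg_r (/h)). apply Rinv_0_lt_compat; auto.
        rewrite Rinv_r by lra. fold (phi h / h). lra. }
      split; lra. }
    destruct (completeness (dev_set H T phi h)) as [S HS].
    { exists (eps/2). intros z [t [Ht1' [Ht2 ->]]].
      destruct (Hgt t Ht1'). rewrite Fdev by auto. apply Fsmall; auto. }
    { exists (dev H (phi h) h). exists (phi h). repeat split; lra. }
    exists S. split; auto.
    assert (S1 : dev H (phi h) h <= S).
    { apply (proj1 HS). exists (phi h). repeat split; lra. }
    assert (S0 : 0 <= dev H (phi h) h) by (unfold dev; apply Rabs_pos).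
    assert (S2 : S <= eps/2).
    { apply (proj2 HS). intros z [t [Ht1' [Ht2 ->]]].
      destruct (Hgt t Ht1'). rewrite Fdev by auto. apply Fsmall; auto. }
    rewrite Rminus_0_r. apply Rabs_def1; lra.
Qed.
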